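(* Let $n$ be odd, $p\ge1$, $q=2^{p+1}$, and let $f:\mathbb{Z}_2^n\to\mathbb{Z}_q$ satisfy $f(x)\equiv 2^p a(x)+\sum_{j=0}^{p-1}2^ja_j(x)\pmod q$ for Boolean functions $a,a_0,\dots,a_{p-1}$ on $\mathbb{Z}_2^n$. For $i\in\{0,\dots,2^p-1\}$ let $g_i=a\oplus z_{i,0}a_0\oplus\cdots\oplus z_{i,p-1}a_{p-1}$ and for $u\in\mathbb{Z}_2^n$ let $W(u)=(W_{g_0}(u),\dots,W_{g_{2^p-1}}(u))$. Suppose every $g_i$ is semi-bent and that for every $u\in\mathbb{Z}_2^n$ there exist $r\in\{0,\dots,2^{p-1}-1\}$ and $\epsilon\in\{\pm1\}$ such that either $W(u)=(\epsilon\sqrt2\,H^{(r)}_{2^{p-1}},\mathbf{0}_{2^{p-1}})$ or $W(u)=(\mathbf{0}_{2^{p-1}},\epsilon\sqrt2\,H^{(r)}_{2^{p-1}})$ (concatenations of vectors of length $2^{p-1}$, $\mathbf{0}_{2^{p-1}}$ the all-zero vector). Then $f$ is generalized bent.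
   Context: For $i\in\{0,\dots,2^m-1\}$, $z_i=(z_{i,0},\dots,z_{i,m-1})\in\mathbb{Z}_2^m$ is the binary vector with $i=\sum_j z_{i,j}2^j$. $H_{2^m}$ is the Sylvester–Hadamard matrix with entries $(H_{2^m})_{k,i}=(-1)^{z_k\cdot z_i}$, and $H^{(r)}_{2^m}$ its $r$-th row. $W_g(u)=2^{-n/2}\sum_{x\in\mathbb{Z}_2^n}(-1)^{g(x)\oplus u\cdot x}$; for odd $n$, $g$ is semi-bent if $W_g(u)\in\{0,\pm\sqrt2\}$ for all $u$. With $\zeta=e^{2\pi\mathrm{i}/q}$, $\mathcal{H}_f(u)=2^{-n/2}\sum_{x}\zeta^{f(x)}(-1)^{u\cdot x}$, and $f$ is generalized bent if $|\mathcal{H}_f(u)|=1$ for all $u$. *)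

(* Defs.v *)
From HB Require Import structures.
From mathcomp Require Import all_boot all_order all_algebra all_field.
Set Implicit Arguments. Unset Strict Implicit. Unset Printing Implicit Defensive.
Import Order.TTheory GRing.Theory Num.Theory.
Local Open Scope ring_scope.

Definition vec (n : nat) := {ffun 'I_n -> bool}.

Definition dotb n (u x : vec n) : bool := \big[addb/false]_(i < n) (u i && x i).

Definition bit (i j : nat) : bool := odd (i %/ 2 ^ j).

Definition bitdot (m k i : nat) : bool :=
  \big[addb/false]_(j < m) (bit k j && bit i j).

Definition hadamard (m k i : nat) : algC := (-1) ^+ bitdot m k i.

Definition walsh n (g : vec n -> bool) (u : vec n) : algC :=
  (sqrtC (2 ^+ n))^-1 * \sum_(x : vec n) (-1) ^+ (g x (+) dotb u x).

Definition semi_bent n (g : vec n -> bool) : Prop :=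
  forall u, walsh g u = 0 \/ walsh g u = sqrtC 2 \/ walsh g u = - sqrtC 2.

(* zeta = e^{2 pi i / 2^(p+1)}: the principal 2^p-th root of -1
   (nthroot picks the root of minimal non-negative argument, for 2^p > 1). *)
Definition zeta (p : nat) : algC := (2 ^ p)%N.-root (-1).

Definition gwalsh n p (f : vec n -> nat) (u : vec n) : algC :=
  (sqrtC (2 ^+ n))^-1 * \sum_(x : vec n) zeta p ^+ f x * (-1) ^+ dotb u x.

Definition gbent n p (f : vec n -> nat) : Prop := forall u, `|gwalsh p f u| = 1.

Definition gcomp n p (a : vec n -> bool) (as_ : 'I_p -> vec n -> bool)
  (i : nat) (x : vec n) : bool :=
  a x (+) \big[addb/false]_(j < p) (bit i j && as_ j x).

(* Main.v *)
Require Import Defs.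
From HB Require Import structures.
From mathcomp Require Import all_boot all_order all_algebra all_field.
From mathcomp Require Import ring.
Import Order.TTheory GRing.Theory Num.Theory.
Local Open Scope ring_scope.
Set Implicit Arguments. Unset Strict Implicit.

Lemma bit_low k i j : (i < 2 ^ k)%N -> (j < k)%N -> bit (i + 2 ^ k) j = bit i j.
Proof.
move=> hi hj; rewrite /bit.
have -> : (2 ^ k = 2 ^ (k - j) * 2 ^ j)%N by rewrite -expnD subnK // ltnW.
rewrite divnDMl ?expn_gt0 // oddD oddX subn_eq0 leqNgt hj /=.
by rewrite addbF.
Qed.

Lemma bit_top k i : (i < 2 ^ k)%N -> bit (i + 2 ^ k) k = true /\ bit i k = false.
Proof.
move=> hi; rewrite /bit -{1}(mul1n (2 ^ k)%N) divnDMl ?expn_gt0 // divn_small //.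
Qed.

Lemma prodsum k (F : nat -> bool -> algC) :
  \sum_(0 <= i < 2 ^ k) \prod_(j < k) F j (bit i j) =
  \prod_(j < k) (F j false + F j true).
Proof.
elim: k => [|k IH].
  by rewrite expn0 big_nat1 !big_ord0.
have h2 : (2 ^ k.+1 = 2 ^ k + 2 ^ k)%N by rewrite expnS mul2n addnn.
rewrite h2 (@big_cat_nat _ _ _ (2 ^ k)%N 0%N (2 ^ k + 2 ^ k)%N) ?leq_addr /=.
rewrite -{2}(add0n (2 ^ k)%N) big_addn addnK.
rewrite big_ord_recr /= mulrDr -IH.
rewrite (eq_big_nat _ _ (F2 := fun i => (\prod_(j < k) F j (bit i j)) * F k false)); last first.
  move=> i /andP[_ hi]; rewrite big_ord_recr /=; have [_ ->] := bit_top hi; done.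
rewrite [X in _ + X](eq_big_nat _ _ (F2 := fun i => (\prod_(j < k) F j (bit i j)) * F k true)); last first.
  move=> i /andP[_ hi]; rewrite big_ord_recr /=; have [-> _] := bit_top hi.
  by congr (_ * _); apply: eq_bigr => j _; rewrite bit_low.
rewrite -!mulr_suml.
all: done.
Qed.

Lemma signr_big k (P : 'I_k -> bool) :
  (-1) ^+ (\big[addb/false]_(j < k) P j) = \prod_(j < k) ((-1) ^+ P j : algC).
Proof.
by apply: (big_morph (fun b : bool => (-1) ^+ b : algC)); [move=> x y; rewrite signr_addb|].
Qed.

Lemma Lsum (z : algC) k (b : nat -> bool) :
  \sum_(0 <= i < 2 ^ k)
     \prod_(j < k) ((1 + z ^+ (2 ^ j) * (-1) ^+ bit i j) * (-1) ^+ (bit i j && b j)) =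
  2 ^+ k * \prod_(j < k) z ^+ (2 ^ j * b j).
Proof.
rewrite (prodsum k (fun j t => (1 + z ^+ (2 ^ j) * (-1) ^+ t) * (-1) ^+ (t && b j))) /=.
have -> : (2:algC) ^+ k = \prod_(j < k) (2:algC) by rewrite prodr_const card_ord.
rewrite -big_split /=.
apply: eq_bigr => j _; case: (b j) => /=.
  by rewrite muln1 expr0 expr1 !mulr1 mulrN1 mulrN; ring.
by rewrite muln0 expr0 !mulr1 mulrN1; ring.
Qed.

Lemma split_sum k (F : nat -> algC) :
  \sum_(i < 2 ^ k.+1) F i = \sum_(0 <= i < 2 ^ k) F i + \sum_(0 <= i < 2 ^ k) F (i + 2 ^ k)%N.
Proof.
rewrite -(big_mkord xpredT F).
have h2 : (2 ^ k.+1 = 2 ^ k + 2 ^ k)%N by rewrite expnS mul2n addnn.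
rewrite h2 (@big_cat_nat _ _ _ (2 ^ k)%N 0%N (2 ^ k + 2 ^ k)%N) ?leq_addr //.
by rewrite -{2}(add0n (2 ^ k)%N) big_addn addnK.
Qed.

Lemma norm1_one (x : algC) m : (0 < m)%N -> x ^+ m = 1 -> `|x| = 1.
Proof.
move=> hm hx; apply/eqP; rewrite -(pexpr_eq1 hm) ?normr_ge0 //.
by rewrite -normrX hx normr1.
Qed.

Lemma norm_1py (y : algC) : y ^+ 2 = -1 -> `|1 + y| = sqrtC 2.
Proof.
move=> hy.
have ny : `|y| = 1 by apply: (@norm1_one _ 4) => //; rewrite (exprM y 2 2) hy; rewrite expr2 mulrNN mulr1.
have y0 : y != 0 by apply/eqP => y0; move: ny; rewrite y0 normr0 => /eqP; rewrite eq_sym oner_eq0.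
have yc : y^* = - y.
  apply: (mulfI y0); rewrite -normCK ny expr1n mulrN -expr2 hy opprK //.
rewrite -[LHS]sqrCK ?normr_ge0 // normCK.
have -> : (1 + y)^* = 1 - y by rewrite rmorphD rmorph1 -yc.
congr sqrtC; transitivity (1 - y ^+ 2); [ring | rewrite hy; ring].
Qed.

Lemma expr_modn (x : algC) M m : x ^+ M = 1 -> x ^+ m = x ^+ (m %% M).
Proof. by move=> hM; rewrite {1}(divn_eq m M) exprD mulnC exprM hM expr1n mul1r. Qed.

Lemma fin (eps w P : algC) k : `|eps| = 1 -> `|P| = 1 -> `|1 + w| = sqrtC 2 ->
  `|(2 ^+ k.+1)^-1 * (eps * sqrtC 2 * (1 + w) * (2 ^+ k * P))| = 1.
Proof.
move=> he hP hw.
rewrite !normrM normfV !normrX hP he hw ger0_norm ?sqrtC_ge0 ?ler0n //.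
rewrite [`|sqrtC 2|]ger0_norm ?sqrtC_ge0 ?ler0n // mul1r mulr1.
have s2 : sqrtC 2 * sqrtC 2 = 2 :> algC by rewrite -expr2 sqrtCK.
rewrite s2 exprS.
field; rewrite expf_neq0 // pnatr_eq0 //.
Qed.
Unset Implicit Arguments.
Theorem theorem4 (n p : nat) (hn : odd n) (hp : (1 <= p)%N)
  (f : vec n -> 'Z_(2 ^ p.+1))
  (a : vec n -> bool) (as_ : 'I_p -> vec n -> bool)
  (hf : forall x, (val (f x) = 2 ^ p * a x + \sum_(j < p) 2 ^ j * as_ j x
                    %[mod 2 ^ p.+1])%N)
  (hsb : forall i : 'I_(2 ^ p), semi_bent (gcomp a as_ i))
  (hW : forall u : vec n, exists r : nat, exists eps : algC,
      (r < 2 ^ p.-1)%N /\ (eps = 1 \/ eps = -1) /\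
      ((forall i : 'I_(2 ^ p),
          walsh (gcomp a as_ i) u =
            if (i < 2 ^ p.-1)%N then eps * sqrtC 2 * hadamard p.-1 r i else 0)
       \/
       (forall i : 'I_(2 ^ p),
          walsh (gcomp a as_ i) u =
            if (i < 2 ^ p.-1)%N then 0
            else eps * sqrtC 2 * hadamard p.-1 r (i - 2 ^ p.-1)))) :
  gbent p (fun x => val (f x)).
Proof.
case: p hp f as_ hf hsb hW => [//|k] _ f as_ hf _ hW u.
set z := zeta k.+1.
have hz1 : z ^+ (2 ^ k.+1) = -1 by rewrite /z /zeta rootCK // expn_gt0.
have hz2 : z ^+ (2 ^ k.+2) = 1 by rewrite expnS mulnC exprM hz1 expr2 mulrNN mulr1.
pose b := fun (j : nat) x => as_ (inord j) x.
have hb : forall (j : 'I_k.+1) x, as_ j x = b j x by move=> j x; rewrite /b inord_val.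
set c := fun i : nat => \prod_(j < k.+1) (1 + z ^+ (2 ^ j) * (-1) ^+ bit i j).
have two0 : (2 : algC) ^+ k.+1 != 0 by rewrite expf_neq0 // pnatr_eq0.
have hx : forall x, z ^+ val (f x) * (-1) ^+ dotb u x =
   (2 ^+ k.+1)^-1 * \sum_(i < 2 ^ k.+1) c i * (-1) ^+ (gcomp a as_ i x (+) dotb u x).
  move=> x.
  have -> : z ^+ val (f x) = (-1) ^+ a x * \prod_(j < k.+1) z ^+ (2 ^ j * b j x).
    rewrite (expr_modn _ hz2) hf -(expr_modn _ hz2) exprD exprM hz1; congr (_ * _).
    rewrite (big_morph (fun m => z ^+ m) (exprD z) (expr0 z)).
    by apply: eq_bigr => j _; rewrite (hb j x).
  have hL := Lsum z k.+1 (fun j => b j x).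
  rewrite -(mulKf two0 (\prod_(j < k.+1) _)) -hL big_mkord.
  rewrite mulrCA -mulrA; congr (_ * _).
  rewrite mulr_sumr mulr_suml; apply: eq_bigr => i _.
  rewrite big_split /= /gcomp !signr_addb signr_big.
  rewrite [in RHS](eq_bigr (fun j : 'I_k.+1 => (-1) ^+ (bit i j && b j x))); last first.
    by move=> j _; rewrite (hb j x).
  rewrite /c; ring.
have sq0 : sqrtC (2 ^+ n : algC) != 0 by rewrite sqrtC_eq0 expf_neq0 // pnatr_eq0.
have G : gwalsh k.+1 (fun x => val (f x)) u =
    (2 ^+ k.+1)^-1 * \sum_(i < 2 ^ k.+1) c i * walsh (gcomp a as_ i) u.
  rewrite /gwalsh (eq_bigr _ (fun x _ => hx x)) -mulr_sumr exchange_big /=.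
  rewrite mulrCA; congr (_ * _); rewrite mulr_sumr; apply: eq_bigr => i _.
  by rewrite /walsh -mulr_sumr mulrCA.
rewrite G (split_sum k (fun i => c i * walsh (gcomp a as_ i) u)).
have [r [eps [hr [heps H]]]] := hW u.
simpl in hr, H.
have lt2 : forall i, (i < 2 ^ k)%N -> (i < 2 ^ k.+1)%N.
  by move=> i hi; apply: (leq_trans hi); rewrite leq_exp2l.
have lt2' : forall i, (i < 2 ^ k)%N -> (i + 2 ^ k < 2 ^ k.+1)%N.
  by move=> i hi; rewrite expnS mul2n -addnn ltn_add2r.
have c_lo : forall i, (i < 2 ^ k)%N ->
  c i = (\prod_(j < k) (1 + z ^+ (2 ^ j) * (-1) ^+ bit i j)) * (1 + z ^+ (2 ^ k)).
  move=> i hi; rewrite /c big_ord_recr /=; have [_ ->] := bit_top hi.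
  by rewrite expr0 mulr1.
have c_hi : forall i, (i < 2 ^ k)%N ->
  c (i + 2 ^ k)%N = (\prod_(j < k) (1 + z ^+ (2 ^ j) * (-1) ^+ bit i j)) * (1 - z ^+ (2 ^ k)).
  move=> i hi; rewrite /c big_ord_recr /=; have [-> _] := bit_top hi.
  rewrite expr1 mulrN1; congr (_ * _); apply: eq_bigr => j _; by rewrite bit_low.
have hh : forall i, hadamard k r i = \prod_(j < k) (-1) ^+ (bit i j && bit r j).
  move=> i; rewrite /hadamard /bitdot signr_big; apply: eq_bigr => j _; by rewrite andbC.
have key := Lsum z k (bit r).
have hz : `|z| = 1 by apply: (norm1_one _ hz2); rewrite expn_gt0.
have hP : `|\prod_(j < k) z ^+ (2 ^ j * bit r j)| = 1.
  by rewrite normr_prod big1 // => j _; rewrite normrX hz expr1n.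
have he : `|eps| = 1 by case: heps => ->; rewrite ?normrN normr1.
have hw2 : (z ^+ (2 ^ k)) ^+ 2 = -1 by rewrite -exprM -expnSr.
case: H => H.
- have Hn : forall i, (i < 2 ^ k.+1)%N -> walsh (gcomp a as_ i) u =
     if (i < 2 ^ k)%N then eps * sqrtC 2 * hadamard k r i else 0.
    by move=> i hi; exact: (H (Ordinal hi)).
  rewrite [X in _ + X]big_nat_cond [X in _ + X]big1 ?addr0; last first.
    move=> i /andP[/andP[_ hi] _]; rewrite Hn ?lt2' // ifN ?mulr0 //.
    by rewrite -leqNgt leq_addl.
  rewrite (eq_big_nat _ _ (F2 := fun i => eps * sqrtC 2 * (1 + z ^+ (2 ^ k)) *
     \prod_(j < k) ((1 + z ^+ (2 ^ j) * (-1) ^+ bit i j) * (-1) ^+ (bit i j && bit r j)))); last first.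
    move=> i /andP[_ hi]; rewrite Hn ?lt2 // hi c_lo // hh big_split /=; ring.
  rewrite -mulr_sumr key; apply: fin => //; exact: norm_1py.
- have Hn : forall i, (i < 2 ^ k.+1)%N -> walsh (gcomp a as_ i) u =
     if (i < 2 ^ k)%N then 0 else eps * sqrtC 2 * hadamard k r (i - 2 ^ k).
    by move=> i hi; exact: (H (Ordinal hi)).
  rewrite [X in X + _]big_nat_cond [X in X + _]big1 ?add0r; last first.
    by move=> i /andP[/andP[_ hi] _]; rewrite Hn ?lt2 // hi mulr0.
  rewrite (eq_big_nat _ _ (F2 := fun i => eps * sqrtC 2 * (1 + - z ^+ (2 ^ k)) *
     \prod_(j < k) ((1 + z ^+ (2 ^ j) * (-1) ^+ bit i j) * (-1) ^+ (bit i j && bit r j)))); last first.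
    move=> i /andP[_ hi]; rewrite Hn ?lt2' // ifN; last by rewrite -leqNgt leq_addl.
    rewrite addnK c_hi // hh big_split /=; ring.
  rewrite -mulr_sumr key; apply: fin => //; apply: norm_1py; by rewrite sqrrN.
Qed.
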